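(* Let $\gamma > 1$ be a real number and let $N$ be an integer with $N > 6$. Let $\alpha^{*}$ denote the smallest strictly positive root of the equation $$1-\cos(\alpha) - \frac{\alpha^2}{2\gamma}=0 .$$ Then for every real $z \in \left[-\frac{\alpha^{*}}{N}, \frac{\alpha^{*}}{N}\right]$ the inequality $$\cos(z) - \frac{\gamma}{N^2}\bigl(\cos(Nz) - 1\bigr) - 1 \geq 0$$ holds.
   Context: $N$ is the number of antennas of a uniform linear array and $\gamma$ plays the role of the allowed array-gain degradation factor (a linear-scale ratio $10^{\gamma_{\mathrm{dB}}/10}$, hence strictly greater than $1$). *)

(* Defs.v *)
From Stdlib Require Import Reals.
Open Scope R_scope.

Definition gain_eq (gamma alpha : R) : R :=
  1 - cos alpha - alpha ^ 2 / (2 * gamma).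

Definition smallest_pos_root (gamma alpha : R) : Prop :=
  0 < alpha /\ gain_eq gamma alpha = 0 /\
  (forall a, 0 < a -> gain_eq gamma a = 0 -> alpha <= a).

(* Main.v *)
Require Import Defs.
From Stdlib Require Import Reals Lra Psatz.
Open Scope R_scope.

Lemma cos_up a : -2 <= a <= 2 -> cos a <= 1 - a^2/2 + a^4/24.
Proof.
intros H. destruct (pre_cos_bound a 0 ltac:(lra) ltac:(lra)) as [_ H2].
unfold cos_approx, cos_term in H2. simpl in H2. lra.
Qed.

Lemma cos_low a : 1 - a^2/2 <= cos a.
Proof.
destruct (Rle_dec (Rabs a) 2) as [H|H].
- assert (-2 <= a <= 2) by (revert H; unfold Rabs; destruct (Rcase_abs a); intros; lra).
  destruct (pre_cos_bound a 0 ltac:(lra) ltac:(lra)) as [H2 _].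
  unfold cos_approx, cos_term in H2. simpl in H2. lra.
- assert (4 < a^2). { apply Rnot_le_lt in H. assert (Rabs a ^2 = a^2) by (apply pow2_abs) .
   rewrite <- H0. nra. }
  pose proof (COS_bound a). lra.
Qed.

Lemma gpos gamma a astar : 1 < gamma -> smallest_pos_root gamma astar ->
  0 <= a <= astar -> 0 <= gain_eq gamma a.
Proof.
intros Hg [Hp [H0 Hm]] Ha.
destruct (Req_dec a 0) as [->|Hne].
{ unfold gain_eq. rewrite cos_0. simpl. unfold Rdiv. lra. }
destruct (Rle_dec 0 (gain_eq gamma a)) as [|Hlt]; [assumption|exfalso].
apply Rnot_le_lt in Hlt.
assert (Hpa : 0 < a) by lra.
set (e := (gamma - 1)/gamma).
assert (He : 0 < e < 1). { unfold e. split. apply Rdiv_lt_0_compat; lra.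
  apply (Rmult_lt_reg_r gamma); try lra. unfold Rdiv. rewrite Rmult_assoc, Rinv_l; lra. }
set (b := Rmin (a/2) (Rmin 1 e)).
assert (Hb1 : 0 < b) by (unfold b; repeat apply Rmin_pos; lra).
assert (Hb2 : b <= a/2) by apply Rmin_l.
assert (Hb3 : b <= 1) by (unfold b; eapply Rle_trans; [apply Rmin_r| apply Rmin_l]).
assert (Hb4 : b <= e) by (unfold b; eapply Rle_trans; [apply Rmin_r| apply Rmin_r]).
assert (Hgb : 0 < gain_eq gamma b).
{ unfold gain_eq. pose proof (cos_up b ltac:(lra)).
  assert (E : b^2/(2*gamma) = b^2/2 * (1 - e)).
  { unfold e. field. lra. }
  rewrite E. assert (b*b <= e) by nra. assert (b^4 <= b^2 * e) by (replace (b^4) with (b^2*(b*b)) by ring; apply Rmult_le_compat_l; nra). assert (0 < b^2*e) by (apply Rmult_lt_0_compat; [apply pow_lt|]; lra). lra. }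
assert (Hc : continuity (fun x => - gain_eq gamma x)).
{ unfold gain_eq. reg. }
destruct (IVT (fun x => - gain_eq gamma x) b a Hc ltac:(lra) ltac:(lra) ltac:(lra)) as [z [Hz1 Hz2]].
assert (Hz : gain_eq gamma z = 0) by lra.
assert (z < astar \/ z = a) by lra.
specialize (Hm z ltac:(lra) Hz).
assert (z = a) by lra. subst z. lra.
Qed.

Theorem lemma1 (gamma : R) (N : nat) (alpha_star : R)
  (Hgamma : 1 < gamma) (HN : (6 < N)%nat)
  (Halpha : smallest_pos_root gamma alpha_star) :
  forall z : R, - (alpha_star / INR N) <= z <= alpha_star / INR N ->
    cos z - gamma / (INR N ^ 2) * (cos (INR N * z) - 1) - 1 >= 0.
Proof.
intros z Hz.
assert (HNp : 0 < INR N) by (apply lt_0_INR; lia).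
set (x := INR N * z).
assert (Hx : Rabs x <= alpha_star).
{ unfold x. apply Rabs_le. split.
  - assert (- (alpha_star / INR N) * INR N <= z * INR N) by (apply Rmult_le_compat_r; lra).
    replace (- (alpha_star / INR N) * INR N) with (- alpha_star) in H by (field; lra). lra.
  - assert (z * INR N <= (alpha_star / INR N) * INR N) by (apply Rmult_le_compat_r; lra).
    replace (alpha_star / INR N * INR N) with alpha_star in H by (field; lra). lra. }
pose proof (gpos gamma (Rabs x) alpha_star Hgamma Halpha (conj (Rabs_pos x) Hx)) as G.
unfold gain_eq in G.
assert (Ec : cos (Rabs x) = cos x).
{ destruct (Rcase_abs x); [rewrite Rabs_left, cos_neg | rewrite Rabs_right]; auto. }
assert (E2 : Rabs x ^ 2 = x ^ 2) by (apply pow2_abs).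
rewrite Ec, E2 in G.
pose proof (cos_low z).
assert (z = x / INR N) by (unfold x; field; lra).
assert (gamma / INR N ^ 2 * (1 - cos x) >= gamma / INR N ^2 * (x^2/(2*gamma))).
{ apply Rle_ge, Rmult_le_compat_l. apply Rlt_le, Rdiv_lt_0_compat; [lra| apply pow_lt; lra]. lra. }
replace (gamma / INR N ^ 2 * (x ^ 2 / (2 * gamma))) with (z^2/2) in H1 by (rewrite H0; field; lra).
lra.
Qed.
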